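(* Let $\beta\colon[0,\infty)\to(0,1)$ be continuous, let $D$ be the multistable subordinator with index $\beta$ and let $E(r)=\inf\{t\ge0: D(t)\ge r\}$, $r\ge0$, be its right-continuous inverse (see the context). Then the sample paths of $E$ are almost surely continuous and non-decreasing.
   Context: Let $\beta\colon[0,\infty)\to(0,1)$ be a continuous function. Let $\Pi=\{(t_i,x_i)\}$ be a Poisson point process on $[0,\infty)\times(0,\infty)$ with intensity measure $\nu(dt,dx)=\beta(t)x^{-\beta(t)-1}\,dt\,dx$. The multistable subordinator with index $\beta$ is the process $D(t)=\sum_{(t_i,x_i)\in\Pi,\ t_i\le t}x_i$, $t\ge0$ (this sum is a.s. finite since $\int_0^t(1-\beta(s))^{-1}ds<\infty$). *)

(* Defs.v *)
From HB Require Import structures.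
From mathcomp Require Import all_boot all_order all_algebra.
From mathcomp Require Import all_classical all_reals all_analysis measurable_realfun.
Set Implicit Arguments. Unset Strict Implicit. Unset Printing Implicit Defensive.
Import Order.TTheory GRing.Theory Num.Theory.
Import numFieldNormedType.Exports.
Local Open Scope classical_set_scope.
Local Open Scope ring_scope.

Section multistable.
Context {R : realType}.

(* Poisson probability mass function p_m(k) = m^k / k! * e^{-m}
   (valid also for m = 0, where it is the Dirac mass at 0; we do not use the
   library's [poisson_pmf], which returns 1 for every k when the rate is 0). *)
Definition pois_pmf (m : R) (k : nat) : R := m ^+ k / k`!%:R * expR (- m).

(* Intensity measure nu(dt,dx) = beta(t) x^{-beta(t)-1} dt dx on
   [0,oo) x (0,oo), evaluated on a set A of R * R (as an iterated integral,
   i.e. the product measure formula). *)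
Definition msub_intensity (beta : R -> R) (A : set (R * R)) : \bar R :=
  (\int[@lebesgue_measure R]_(t in [set t : R | (0 <= t)%R])
     (\int[@lebesgue_measure R]_(x in xsection A t `&` [set x : R | (0 < x)%R])
        (beta t * powR x (- beta t - 1))%R%:E))%E.

Definition count_in (Pi : set (R * R)) (A : set (R * R)) : \bar R :=
  (\esum_(p in Pi `&` A) 1)%E.

Definition is_poisson_point_process {d : measure_display} {Omega : measurableType d}
    (P : probability Omega R) (nu : set (R * R) -> \bar R)
    (Pi : Omega -> set (R * R)) : Prop :=
  [/\ (forall A, measurable A -> measurable_fun [set: Omega] (fun w => count_in (Pi w) A : \bar R)),
      (forall A, measurable A -> (nu A < +oo)%E -> forall k : nat,
          P [set w | count_in (Pi w) A = (k%:R)%:E] = (pois_pmf (fine (nu A)) k)%:E),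
      (forall A, measurable A -> nu A = +oo%E ->
          P [set w | count_in (Pi w) A = +oo%E] = 1%E) &
      (forall (n : nat) (A : 'I_n -> set (R * R)) (k : 'I_n -> nat),
          (forall i, measurable (A i)) ->
          (forall i j, i != j -> A i `&` A j = set0) ->
          P (\bigcap_(i in [set: 'I_n]) [set w | count_in (Pi w) (A i) = ((k i)%:R)%:E])
          = (\prod_(i < n) P [set w | count_in (Pi w) (A i) = ((k i)%:R)%:E])%E)].

Definition msub_D (Pi : set (R * R)) (t : R) : \bar R :=
  (\esum_(p in Pi `&` [set p : R * R | (p.1 <= t)%R]) (p.2)%:E)%E.

Definition msub_E (D : R -> \bar R) (r : R) : R :=
  inf [set t : R | 0 <= t /\ (r%:E <= D t)%E].

End multistable.

(* Main.v *)
Require Import Defs.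
From HB Require Import structures.
From mathcomp Require Import all_boot all_order all_algebra.
From mathcomp Require Import all_classical all_reals all_analysis measurable_realfun.
From mathcomp Require Import lra.
Import Order.TTheory GRing.Theory Num.Theory.
Import numFieldNormedType.Exports.
Local Open Scope classical_set_scope.
Local Open Scope ring_scope.

Section det.
Context {R : realType}.
Variable D : R -> \bar R.
Hypothesis D0 : forall t, 0 <= t -> (0 <= D t)%E.
Hypothesis Dmono : forall s t, 0 <= s -> s <= t -> (D s <= D t)%E.
Hypothesis Dstrict : forall s t, 0 <= s -> s < t -> (D s < +oo)%E -> (D s < D t)%E.
Hypothesis Dunb : forall r : R, exists t, 0 <= t /\ (r%:E <= D t)%E.

Let S r := [set t : R | 0 <= t /\ (r%:E <= D t)%E].
Let Sne r : nonempty (S r).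
Proof. by have [t ht] := Dunb r; exists t. Qed.
Let Slb r : lbound (S r) 0.
Proof. by move=> t []. Qed.
Let Shinf r : has_inf (S r).
Proof. by split; [exact: Sne| exists 0; exact: Slb]. Qed.
Let E_ge0 r : 0 <= msub_E D r.
Proof. exact: lb_le_inf (Sne r) (Slb r). Qed.
Let E_le r t : S r t -> msub_E D r <= t.
Proof. by move=> St; apply: (ge_inf (Shinf r).2). Qed.
Let E_ge r x : (forall t, S r t -> x <= t) -> x <= msub_E D r.
Proof. by move=> h; apply: lb_le_inf (Sne r) _ => t /h. Qed.

Lemma E_homo : {homo msub_E D : r s / r <= s}.
Proof.
move=> r s rs; apply: E_ge => t [t0 st]; apply: E_le; split => //.
by apply: le_trans st; rewrite lee_fin.
Qed.

Lemma E_cont : continuous (msub_E D).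
Proof.
move=> r0; apply/cvgrPdist_lt => e e0.
set e1 := msub_E D r0.
have e20 : 0 < e / 2 by rewrite divr_gt0.
set t1 := e1 + e / 2.
have t10 : 0 <= t1 by apply: addr_ge0; [exact: E_ge0|exact: ltW].
have [y Sy yt1] : exists2 y, S r0 y & y < t1.
  by apply: inf_lt; [exact: Sne| rewrite /t1 ltrDl].
have Dt1 : (r0%:E < D t1)%E.
  move: Sy; rewrite /S /= => -[y0 ry].
  have [Dyoo|Dyfin] := eqVneq (D y) +oo%E.
    have := Dmono _ _ y0 (ltW yt1); rewrite Dyoo leye_eq => /eqP ->.
    exact: ltry.
  apply: le_lt_trans ry _; apply: Dstrict => //.
  by rewrite ltey.
have [d1 d10 Hd1] : exists2 d1 : R, 0 < d1 & forall r, r < r0 + d1 -> (r%:E <= D t1)%E.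
  move: Dt1; case: (D t1) => [x| |] //.
    rewrite lte_fin => rx; exists (x - r0); first by rewrite subr_gt0.
    by move=> r; rewrite addrC subrK lee_fin => /ltW.
  by move=> _; exists 1 => // r _; rewrite leey.
have [d2 d20 Hd2] : exists2 d2 : R, 0 < d2 & forall r, r0 - d2 < r -> e1 - e < msub_E D r.
  have [e1e|e1e] := ltP e1 e.
    by exists 1 => // r _; apply: lt_le_trans (E_ge0 r); rewrite subr_lt0.
  set t2 := e1 - e / 2.
  have t20 : 0 < t2.
    rewrite /t2; lra.
  have nS : ~ S r0 t2.
    move=> /E_le; rewrite -/e1 /t2 => h; lra.
  have Dt2 : (D t2 < r0%:E)%E.
    by rewrite ltNge; apply/negP => h; apply: nS; split => //; exact: ltW.
  have := D0 _ (ltW t20); move: Dt2; case E2: (D t2) => [v| |] //.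
  rewrite lte_fin => vr _; exists (r0 - v); first by rewrite subr_gt0.
  move=> r; rewrite opprB addrC subrK => vr'.
  have : t2 <= msub_E D r.
    apply: E_ge => t [t0 rt]; rewrite leNgt; apply/negP => tt2.
    have := Dmono _ _ t0 (ltW tt2); move: (D t) rt => Dt rt Dtt2.
    have := le_trans rt Dtt2; rewrite E2 lee_fin => /(lt_le_trans vr').
    by rewrite ltxx.
  by move=> h; rewrite /t2 in h; lra.
apply/nbhs_ballP; exists (Num.min d1 d2) => /=; first by rewrite lt_min d10 d20.
move=> r /= H.
move: H; rewrite lt_min => /andP[h1 h2].
move: h1 h2; rewrite !ltr_distlC => /andP[a1 b1] /andP[a2 b2].
have u : msub_E D r <= t1 by apply: E_le; split => //; apply: Hd1.
have l := Hd2 r a2.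
apply/andP; split; rewrite /t1 in u; lra.
Qed.
End det.
Section Dprops.
Context {R : realType}.
Variable Pi : set (R * R).
Hypothesis H1 : forall p, Pi p -> 0 < p.2.
Hypothesis H2 : forall s t : R, 0 <= s -> s < t -> exists p, Pi p /\ s < p.1 <= t.
Hypothesis H3 : count_in Pi [set p | 1 <= p.2] = +oo%E.

Lemma D_ge0 t : (0 <= msub_D Pi t)%E.
Proof. by apply: esum_ge0 => p [/H1 /ltW]; rewrite lee_fin. Qed.

Let Dsplit s t : s <= t -> msub_D Pi t =
  (msub_D Pi s + \esum_(p in (Pi `&` [set p : R * R | (p.1 <= t)%R]) `&` ~` [set p : R * R | (p.1 <= s)%R]) (p.2)%:E)%E.
Proof.
move=> st; rewrite /msub_D (esumID [set p | p.1 <= s]); last first.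
  by move=> p [/H1 /ltW]; rewrite lee_fin.
congr (esum _ _ + _)%E; apply/seteqP; split => p /=.
  by move=> [[Pp pt] ps].
by move=> [Pp ps]; split => //; split => //; exact: le_trans st.
Qed.

Lemma D_mono s t : s <= t -> (msub_D Pi s <= msub_D Pi t)%E.
Proof.
move=> st; rewrite (Dsplit _ _ st); apply: leeDl; apply: esum_ge0.
by move=> p [[/H1 /ltW]]; rewrite lee_fin.
Qed.

Lemma D_strict s t : 0 <= s -> s < t -> (msub_D Pi s < +oo)%E ->
  (msub_D Pi s < msub_D Pi t)%E.
Proof.
move=> s0 st Dsoo; have [p [Pp /andP[sp pt]]] := H2 _ _ s0 st.
rewrite (Dsplit _ _ (ltW st)).
have fin : msub_D Pi s \is a fin_num by rewrite ge0_fin_numE // D_ge0.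
apply: (@lt_le_trans _ _ (msub_D Pi s + (p.2)%:E)%E).
  by rewrite lteDl // lte_fin H1.
apply: leeD2l; apply: esum_ge; exists [set p].
  split; first exact: finite_set1.
  by move=> q /= ->; split; [split|apply/negP; rewrite -ltNge].
by rewrite fsbig_set1.
Qed.

Lemma D_unb (r : R) : exists t, 0 <= t /\ (r%:E <= msub_D Pi t)%E.
Proof.
have : (r%:E < count_in Pi [set p : R * R | (1 <= p.2)%R])%E by rewrite H3 ltry.
rewrite /count_in /esum => /ereal_sup_gt[_ [X [finX XS] <-] rX].
pose t := \sum_(i \in X) `|i.1|.
have Xt : forall p, X p -> p.1 <= t.
  move=> p Xp; apply: le_trans (ler_norm _) _; rewrite -lee_fin /t -fsumEFin //.
  rewrite -(@fsbig_set1 _ _ (@GRing.add _ : Monoid.com_law 0%E) _ p (fun i => (`|i.1|)%:E)).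
  apply: lee_fsum_nneg_subset => //.
  by apply/subsetP => q /= ->.
exists t; split; first by apply: fsumr_ge0 => i _.
apply: (le_trans (ltW rX)); apply: (@le_trans _ _ (\sum_(i \in X) (i.2)%:E)%R).
  by apply: lee_fsum => // i /XS [_]; rewrite /= lee_fin.
apply: esum_ge; exists X => //; split => // p Xp; split; first by have [] := XS p Xp.
exact: Xt.
Qed.
End Dprops.
Section prob.
Context {R : realType} (d : measure_display) (Omega : measurableType d)
    (P : probability Omega R).

Lemma ae_of_prob1 (E : set Omega) : measurable E -> P E = 1%E ->
  {ae P, forall w, E w}.
Proof.
move=> mE PE; exists (~` E); split.
- exact: measurableC.
- by rewrite probability_setC // PE subee.
- by move=> w /= nE.
Qed.

Variable nu : set (R * R) -> \bar R.
Variable Pi : Omega -> set (R * R).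
Hypothesis hPi : is_poisson_point_process P nu Pi.

Lemma ae_count0 A : measurable A -> nu A = 0%E ->
  {ae P, forall w, count_in (Pi w) A = 0%E}.
Proof.
case: hPi => mc pc _ _ mA nA.
have mE : measurable [set w | count_in (Pi w) A = 0%E].
  have := mc A mA measurableT [set 0%E] (emeasurable_set1 _).
  by rewrite setTI.
apply: ae_of_prob1 => //.
have := pc A mA; rewrite nA => /(_ (ltry _) 0%N).
by rewrite /pois_pmf /= expr0 fact0 divr1 oppr0 expR0 mul1r.
Qed.

Lemma ae_county A : measurable A -> nu A = +oo%E ->
  {ae P, forall w, count_in (Pi w) A = +oo%E}.
Proof.
case: hPi => mc _ pc _ mA nA.
have mE : measurable [set w | count_in (Pi w) A = +oo%E].
  have := mc A mA measurableT [set +oo%E] (emeasurable_set1 _).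
  by rewrite setTI.
by apply: ae_of_prob1 => //; apply: pc.
Qed.
End prob.

Lemma ge0_le_integral_nm {d} {T : measurableType d} {R : realType}
  (mu : {measure set T -> \bar R}) (D : set T) (f g : T -> \bar R) :
  (forall x, D x -> (0 <= f x)%E) -> (forall x, D x -> (f x <= g x)%E) ->
  (\int[mu]_(x in D) f x <= \int[mu]_(x in D) g x)%E.
Proof.
move=> f0 fg; rewrite !ge0_integralE //; last first.
  by move=> x Dx; apply: le_trans (f0 x Dx) (fg x Dx).
apply: le_ereal_sup => _ [h hf <-]; exists h => //= x.
by apply: le_trans (hf x) _; apply: lee_restrict.
Qed.

Section ftc.
Context {R : realType}.
Local Notation mu := (@lebesgue_measure R).

Lemma FTC_pow (b u v : R) : 0 < b -> 0 < u -> u < v ->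
 (\int[mu]_(x in `[u, v]) (b * powR x (- b - 1))%:E
   = (powR u (- b) - powR v (- b))%:E)%E.
Proof.
move=> b0 u0 uv.
pose F x := - powR x (- b).
have dF : forall x, 0 < x -> derivable F x 1.
  by move=> x x0; apply: derivableN; apply: derivable_powR; rewrite in_itv /= x0.
have cF : {within `[u, v], continuous F}.
  apply: derivable_within_continuous => x; rewrite in_itv /= => /andP[ux _].
  by apply: dF; apply: lt_le_trans u0 ux.
have dFE : forall x : R, 0 < x -> derive1 F x = b * powR x (- b - 1).
  move=> x x0; rewrite derive1N; last by apply: derivable_powR; rewrite in_itv /= x0.
  by rewrite powR_derive1 ?in_itv /= ?x0 // mulNr opprK.
rewrite (@continuous_FTC2 _ _ F) //.
- by rewrite /F -EFinB; congr EFin; lra.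
- have : {within `[u, v], continuous (fun x => b * powR x (- b - 1))}.
    apply: derivable_within_continuous => x; rewrite in_itv /= => /andP[ux _].
    apply: derivableM => //; apply: derivable_powR.
    by rewrite in_itv /= andbT; apply: lt_le_trans u0 ux.
  by [].
- have [h1 h2 h3] := (continuous_within_itvP _ uv).1 cF.
  split => //; move=> x; rewrite in_itv /= => /andP[ux _].
  by apply: dF; apply: lt_trans u0 ux.
- move=> x; rewrite in_itv /= => /andP[ux _]; apply: dFE.
  exact: lt_trans u0 ux.
Qed.


Lemma inner_lb (bt u v : R) (X : set R) : 0 < bt -> 0 < u -> u < v ->
  measurable X -> `[u, v] `<=` X -> (X `<=` [set x | 0 < x]) ->
  ((powR u (- bt) - powR v (- bt))%:E <=
     \int[mu]_(x in X) (bt * powR x (- bt - 1))%:E)%E.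
Proof.
move=> bt0 u0 uv mX uvX Xpos; rewrite -FTC_pow //.
apply: ge0_subset_integral => //.
- apply/measurable_EFinP; apply: measurable_funM; first exact: measurable_cst.
  by apply: measurable_funTS; exact: measurable_powR.
- by move=> x _; rewrite lee_fin; apply: mulr_ge0; [exact: ltW|exact: powR_ge0].
Qed.

Lemma set_ge0 : [set t : R | 0 <= t] = `[0%R, +oo[%classic.
Proof. by apply/seteqP; split => t /=; rewrite in_itv /= andbT. Qed.

Lemma intensity0 (beta : R -> R) :
  msub_intensity beta (setT `*` `]-oo, 0]) = 0%E.
Proof.
rewrite /msub_intensity (eq_integral (fun=> 0%E)); first by rewrite integral0.
move=> t _; rewrite (_ : _ `&` _ = set0) ?integral_set0 //.
apply/seteqP; split => x //= [/xsectionP [_ /=]]; rewrite in_itv /= => x0 x0'.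
by move: (le_lt_trans x0 x0'); rewrite ltxx.
Qed.

Lemma intensity3 (beta : R -> R)
  (beta_range : forall t : R, 0 <= t -> 0 < beta t < 1) :
  msub_intensity beta (setT `*` `[1, +oo[) = +oo%E.
Proof.
rewrite /msub_intensity.
apply/eqP; rewrite eq_le leey /=.
have H : (\int[mu]_(t in [set t : R | (0 <= t)%R]) (cst (2^-1 : R)%:E t) = +oo)%E.
  rewrite integral_cst; last by rewrite set_ge0; exact: measurable_itv.
  rewrite set_ge0 /= lebesgue_measure_itv /= ltry addye // gt0_muley // lte_fin invr_gt0.

  rewrite -{1}H; apply: ge0_le_integral_nm => t; first by rewrite /= lee_fin.
move=> /= t0; have /andP[b0 b1] := beta_range _ t0; set bt := beta t in b0 b1 *.
have -> : xsection (setT `*` `[1%R, +oo[) t `&` [set x : R | 0 < x] = `[1%R, +oo[%classic.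
  apply/seteqP; split => x /=.
    by move=> [/xsectionP [_ /=]].
  rewrite in_itv /= andbT => x1; split; last by apply: lt_le_trans x1.
  by apply/xsectionP; split => //=; rewrite in_itv /= x1.
set K := powR 2 bt^-1.
have K2 : 2 <= K.
  apply: le1r_powR; first by rewrite ler1n.
  by rewrite invf_ge1 // ltW.
have K1 : 1 < K by apply: lt_le_trans K2; rewrite ltr1n.
have := @inner_lb _ _ _ `[1%R, +oo[%classic b0 ltr01 K1 (measurable_itv _).
move=> /(_ _ _) h; apply: le_trans (h _ _).
- rewrite /K -powRrM mulrN mulVf ?gt_eqF // powR_inv1 // powR1 lee_fin.
  lra.
- by move=> x /=; rewrite !in_itv /= => /andP[->].
- by move=> x /=; rewrite in_itv /= andbT => x1; apply: lt_le_trans x1.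
Qed.

Lemma intensity1 (beta : R -> R)
  (beta_range : forall t : R, 0 <= t -> 0 < beta t < 1) (a b : R) : 0 <= a -> a < b ->
  msub_intensity beta (`]a, b] `*` `]0, +oo[) = +oo%E.
Proof.
move=> a0 ab; rewrite /msub_intensity.
set A := `]a, b]%classic.
have mA : measurable A by exact: measurable_itv.
have key : forall M : R, 0 <= M -> ((M * (b - a))%:E <=
    \int[mu]_(t in [set t : R | (0 <= t)%R])
     \int[mu]_(x in xsection (A `*` `]0%R, +oo[) t `&` [set x : R | (0 < x)%R])
        (beta t * x `^ (- beta t - 1))%:E)%E.
  move=> M M0.
  have H : (\int[mu]_(t in [set t : R | (0 <= t)%R]) (M%:E * (\1_A t)%:E) = (M * (b - a))%:E)%E.
    have mD : measurable [set t : R | 0 <= t] by rewrite set_ge0; exact: measurable_itv.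
    have mI : measurable_fun [set t : R | 0 <= t] (fun t : R => (\1_A t : R)%:E).
      by apply/measurable_EFinP; exact: measurable_indic.
    rewrite ge0_integralZl_EFin //.
    rewrite integral_indic //.
    have -> : A `&` [set t : R | 0 <= t] = A.
      apply/seteqP; split => t /=; first by case.
      move=> At; split => //; move: At; rewrite /A /= (@in_itv _ R) /= => /andP[ha _].
      exact: le_trans a0 (ltW ha).
    rewrite /A /= lebesgue_measure_itv /= lte_fin ab -EFinD -EFinM.
    by [].
  rewrite -H; apply: ge0_le_integral_nm => t.
    by move=> _; apply: mule_ge0; rewrite lee_fin // indicE.
  move=> /= t0; have /andP[b0 b1] := beta_range _ t0; set bt := beta t in b0 b1 *.
  rewrite indicE; case: (boolP (t \in A)) => tA; last first.
    rewrite /= mule0; apply: integral_ge0 => x [_ /= x0].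
    by rewrite lee_fin; apply: mulr_ge0; [exact: ltW|exact: powR_ge0].
  rewrite /= mule1.
  have -> : xsection (A `*` `]0%R, +oo[) t `&` [set x : R | 0 < x] = `]0%R, +oo[%classic.
    apply/seteqP; split => x /=.
      by move=> [/xsectionP [_ /=]].
    rewrite in_itv /= andbT => x0; split => //.
    by apply/xsectionP; split => //=; [rewrite inE in tA|rewrite in_itv /= x0].
  set c := M + 2.
  have c1 : 1 < c by rewrite /c; lra.
  set u := powR c (- bt^-1).
  have u0 : 0 < u by apply: powR_gt0; rewrite /c; lra.
  have u1 : u < 1.
    rewrite /u powRN invf_lt1; last by apply: powR_gt0; lra.
    apply: (lt_le_trans c1); apply: le1r_powR; first exact: ltW.
    by rewrite invf_ge1 // ltW.
  have := @inner_lb _ _ _ `]0%R, +oo[%classic b0 u0 u1 (measurable_itv _).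
  move=> /(_ _ _) h; apply: le_trans (h _ _).
  - rewrite /u -powRrM mulrNN mulVf ?gt_eqF // powRr1; last by rewrite /c; lra.
    rewrite powR1 lee_fin /c; lra.
  - by move=> x /=; rewrite !in_itv /= andbT => /andP[ux _]; apply: lt_le_trans u0 ux.
  - by move=> x /=; rewrite in_itv /= andbT.
apply: eq_infty => r.
have ba : 0 < b - a by rewrite subr_gt0.
apply: le_trans (key (Num.max 0 r / (b - a)) _).
  by rewrite divfK ?gt_eqF // lee_fin le_max lexx orbT.
by apply: divr_ge0; [rewrite le_max lexx|exact: ltW].
Qed.
End ftc.

Theorem mainTheorem4 (R : realType) (d : measure_display) (Omega : measurableType d)
    (P : probability Omega R) (beta : R -> R)
    (beta_cont : {within [set t : R | 0 <= t], continuous beta})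
    (beta_range : forall t : R, 0 <= t -> 0 < beta t < 1)
    (Pi : Omega -> set (R * R))
    (hPi : is_poisson_point_process P (msub_intensity beta) Pi) :
  {ae P, forall w,
    {within [set r : R | 0 <= r], continuous (msub_E (msub_D (Pi w)))} /\
    {in [set r : R | 0 <= r] &, {homo msub_E (msub_D (Pi w)) : r s / r <= s}}}.
Proof.
pose I (n m : nat) : R * R -> Prop :=
  `](m%:R / n.+1%:R), (m.+1%:R / n.+1%:R)] `*` `]0, +oo[.
have h0 := ae_count0 _ _ _ _ _ hPi _ (measurableX measurableT (measurable_itv _))
  (intensity0 beta).
have h3 := ae_county _ _ _ _ _ hPi _ (measurableX measurableT (measurable_itv _))
  (intensity3 _ beta_range).
have h1 : {ae P, forall w, forall n m : nat, count_in (Pi w) (I n m) = +oo%E}.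
  apply: ae_foralln => n; apply: ae_foralln => m.
  apply: (ae_county _ _ _ _ _ hPi _ (measurableX (measurable_itv _) (measurable_itv _))).
  apply: (intensity1 _ beta_range) => //.
  by rewrite ltr_pM2r ?invr_gt0 // ltr_nat.
apply: filterS3 h0 h1 h3 => w c0 c1 c3.
have H1 : forall p, Pi w p -> 0 < p.2.
  move=> p Pp; rewrite ltNge; apply/negP => p0.
  have : (1 <= count_in (Pi w) (setT `*` `]-oo, 0%R]))%E.
    apply: esum_ge; exists [set p].
      split; first exact: finite_set1.
      by move=> q /= ->; split => //; split => //=; rewrite in_itv.
    by rewrite fsbig_set1.
  by rewrite c0 lee_fin ler10.
have H2 : forall s t : R, 0 <= s -> s < t -> exists p, Pi w p /\ s < p.1 <= t.
  move=> s t s0 st.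
  have [n hn] : exists n : nat, s + n.+1%:R^-1 < s + (t - s) / 2.
    by apply: ltr_add_invr; lra.
  set N : R := n.+1%:R.
  have N0 : 0 < N by rewrite /N ltr0n.
  set x := s * N.
  have x0 : 0 <= x by rewrite /x mulr_ge0 // ltW.
  set m := (Num.trunc x).+1.
  have hm1 : x < m%:R.
    by rewrite /m -truncn_le_nat.
  have hm2 : m%:R <= x + 1.
    rewrite /m -addn1 natrD lerD2r -truncn_ge_nat //.
  have hk : 2 < (t - s) * N.
    move: hn; rewrite ltrD2l -div1r ltr_pdivrMr // => h.
    have : 1 * 2 < (t - s) / 2 * N * 2 by rewrite ltr_pM2r.
    by rewrite mul1r mulrAC divfK // => ->.
  have [p [Pp Ip]] : (Pi w `&` I n m) !=set0.
    apply/set0P; apply/eqP => h; move: (c1 n m).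
    by rewrite /count_in h esum_set0.
  exists p; split => //; move: Ip => [/= + _]; rewrite in_itv /= => /andP[a b].
  apply/andP; split.
    apply: le_lt_trans a; rewrite ler_pdivlMr //; exact: ltW.
  apply: le_trans b _; rewrite ler_pdivrMr // -/N.
  rewrite -addn1 natrD; move: hk hm2; rewrite /x; nra.
have H3 : count_in (Pi w) [set p | 1 <= p.2] = +oo%E.
  rewrite -c3; congr count_in; apply/seteqP; split => p /=.
    by move=> h; split => //=; rewrite in_itv /= h.
  by move=> [_] /=; rewrite in_itv /= andbT.
have D0 := D_ge0 _ H1.
have Dm := D_mono _ H1.
have Ds := D_strict _ H1 H2.
have Du := D_unb _ H3.
have Hs : forall s t : R, 0 <= s -> s < t -> (msub_D (Pi w) s < +oo)%E ->
    (msub_D (Pi w) s < msub_D (Pi w) t)%E by exact: Ds.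
have Hm : forall s t : R, 0 <= s -> s <= t -> (msub_D (Pi w) s <= msub_D (Pi w) t)%E.
  by move=> s t _; exact: Dm.
have H0 : forall t : R, 0 <= t -> (0 <= msub_D (Pi w) t)%E by move=> t _; exact: D0.
split.
  by apply: continuous_subspaceT; apply: (E_cont _ H0 Hm Hs Du).
by move=> r s _ _; apply: (E_homo _ Du).
Qed.
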